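(* Let $n$ be a natural number and $s$ a negative integer with $n+s>0$, and put $m=\frac{(-s)(n-1)}{n+s}$. Suppose there exists a divisible design graph $\Delta$ with parameters $(V,K,\lambda_1,\lambda_2;m,n)$, where $V=\frac{n(-s)(n-1)}{n+s}$, $K=(-s)(n-1)$, $\lambda_1=(-s)(n+s-1)$, $\lambda_2=\frac{(-s)(n-1)(n+s)}{n}$, with canonical classes $P_1,\dots,P_m$. Let $\mathcal{D}=(\mathcal{P},\mathcal{B})$ be a symmetric $2$-design with parameters $(m,-s,\frac{(-s)(n+s)}{n})$, with $\mathcal{P}$ disjoint from the vertex set of $\Delta$, and let $\phi$ be any bijection from $\{P_1,\dots,P_m\}$ to $\mathcal{B}$. Define the graph $\Gamma$ with vertex set $V(\Delta)\cup\mathcal{P}$ in which: two vertices of $\Delta$ are adjacent iff they are adjacent in $\Delta$; no two points of $\mathcal{P}$ are adjacent; a vertex $x\in P_i$ is adjacent to $y\in\mathcal{P}$ iff $y\in\phi(P_i)$. Then $\Gamma$ is a strongly regular graph with parameters $v=m(n+1)$, $k=(-s)n$, $\lambda=\mu=(-s)(n+s)$.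
   Context: A $K$-regular graph on $V$ vertices, neither complete nor edgeless, is a divisible design graph with parameters $(V,K,\lambda_1,\lambda_2;m,n)$ if its vertex set can be partitioned into $m$ classes (canonical classes) of size $n$ such that any two distinct vertices in the same class have exactly $\lambda_1$ common neighbours and any two vertices in different classes have exactly $\lambda_2$ common neighbours. A symmetric $2$-design with parameters $(m,\kappa,\ell)$ is a pair $(\mathcal{P},\mathcal{B})$ where $\mathcal{P}$ is a set of $m$ points and $\mathcal{B}$ a set of $m$ subsets (blocks) of $\mathcal{P}$, each of size $\kappa$, such that every two distinct points lie in exactly $\ell$ common blocks (equivalently, any two distinct blocks meet in exactly $\ell$ points). A strongly regular graph with parameters $(v,k,\lambda,\mu)$ is a $k$-regular graph on $v$ vertices in which adjacent vertices have $\lambda$ and distinct non-adjacent vertices have $\mu$ common neighbours. *)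

(* Defs.v *)
From mathcomp Require Import all_boot all_order all_algebra.
Set Implicit Arguments. Unset Strict Implicit. Unset Printing Implicit Defensive.
Import Order.TTheory GRing.Theory Num.Theory.
Local Open Scope ring_scope.

Definition is_graph (T : finType) (e : rel T) : Prop :=
  symmetric e /\ irreflexive e.

Definition nbhd (T : finType) (e : rel T) (x : T) : {set T} := [set y | e x y].

Definition common (T : finType) (e : rel T) (x y : T) : nat :=
  #|[set z | e x z && e y z]|.

Definition complete_graph (T : finType) (e : rel T) : Prop :=
  forall x y : T, x != y -> e x y.

Definition edgeless_graph (T : finType) (e : rel T) : Prop :=
  forall x y : T, ~~ e x y.

(* Divisible design graph with parameters (V,K,l1,l2;m,n), the canonical
   classes being the fibres P_i = cls^-1(i), i : 'I_m.  Numerical parameters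
   are rationals (the paper defines them by fractions). *)
Definition is_ddg (T : finType) (e : rel T) (m : nat) (cls : T -> 'I_m)
    (V K l1 l2 n : rat) : Prop :=
  is_graph e /\ #|T|%:R = V /\
  (forall x : T, #|nbhd e x|%:R = K) /\
  ~ complete_graph e /\ ~ edgeless_graph e /\
  (forall i : 'I_m, #|[set x | cls x == i]|%:R = n) /\
  (forall x y : T, x != y -> cls x = cls y -> (common e x y)%:R = l1) /\
  (forall x y : T, cls x != cls y -> (common e x y)%:R = l2).

Definition is_sym_design (Pt : finType) (B : {set {set Pt}})
    (m kappa ell : rat) : Prop :=
  [/\ #|Pt|%:R = m, #|B|%:R = m,
      forall b, b \in B -> #|b|%:R = kappa
    & forall p q : Pt, p != q ->
        #|[set b in B | (p \in b) && (q \in b)]|%:R = ell].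

Definition is_srg (T : finType) (e : rel T) (v k lam mu : rat) : Prop :=
  [/\ is_graph e, #|T|%:R = v,
      forall x : T, #|nbhd e x|%:R = k,
      forall x y : T, x != y -> e x y -> (common e x y)%:R = lam
    & forall x y : T, x != y -> ~~ e x y -> (common e x y)%:R = mu].

Definition gamma_rel (T Pt : finType) (e : rel T) (m : nat) (cls : T -> 'I_m)
    (phi : 'I_m -> {set Pt}) : rel (T + Pt) :=
  fun u v =>
    match u, v with
    | inl x, inl y => e x y
    | inr _, inr _ => false
    | inl x, inr p => p \in phi (cls x)
    | inr p, inl x => p \in phi (cls x)
    end.

(* Main.v *)
Require Import Defs.
From mathcomp Require Import all_boot all_order all_algebra.
From mathcomp Require Import ring lra zify.
Set Implicit Arguments. Unset Strict Implicit. Unset Printing Implicit Defensive.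
Import Order.TTheory GRing.Theory Num.Theory.
Local Open Scope ring_scope.

Notation ind b := ((nat_of_bool b)%:R : rat).

Lemma indA (a b : bool) : ind (a && b) = ind a * ind b.
Proof. by case: a; case: b; rewrite /= ?mul1r ?mul0r. Qed.

Lemma cardE' (T : finType) (P : pred T) :
  (#|[set x | P x]|%:R : rat) = \sum_x ind (P x).
Proof.
rewrite -sum1_card natr_sum big_mkcond /=; apply: eq_bigr => x _.
by rewrite inE; case: (P x).
Qed.

Lemma sum_sq_expand (I : finType) (P : pred I) (f : I -> rat) c :
  \sum_(i | P i) (f i - c)^+2 =
  \sum_(i | P i) f i ^+2 - 2 * c * \sum_(i | P i) f i + c^+2 * \sum_(i | P i) 1.
Proof.
rewrite mulr_sumr mulr_sumr -sumrB -big_split /=; apply: eq_bigr => i _; ring.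
Qed.

Lemma var0 (I : finType) (P : pred I) (f : I -> rat) c :
  \sum_(i | P i) (f i - c)^+2 = 0 -> forall i, P i -> f i = c.
Proof.
move=> H i Pi; have := psumr_eq0P (fun i _ => sqr_ge0 (f i - c)) H Pi.
by move/eqP; rewrite sqrf_eq0 subr_eq0 => /eqP.
Qed.

Lemma sum_cls (T : finType) m (cls : T -> 'I_m) (F : 'I_m -> rat) (N : rat) :
  (forall i : 'I_m, #|[set x | cls x == i]|%:R = N) ->
  \sum_x F (cls x) = \sum_i F i * N.
Proof.
move=> hN.
transitivity (\sum_x \sum_i ind (cls x == i) * F i).
  apply: eq_bigr => x _; rewrite (bigD1 (cls x)) //= eqxx mul1r big1 ?addr0 //.
  by move=> i /negbTE; rewrite eq_sym => ->; rewrite mul0r.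
rewrite exchange_big /=; apply: eq_bigr => i _.
by rewrite -(hN i) cardE' mulr_sumr; apply: eq_bigr => x _; rewrite mulrC.
Qed.

Lemma sum_ind_eq (I : finType) (a : I) (G : I -> rat) :
  \sum_j ind (a == j) * G j = G a.
Proof.
rewrite (bigD1 a) //= eqxx mul1r big1 ?addr0 //.
by move=> i /negbTE; rewrite eq_sym => ->; rewrite mul0r.
Qed.

Lemma var0_2 (I J : finType) (f : I -> J -> rat) c :
  \sum_i \sum_j (f i j - c)^+2 = 0 -> forall i j, f i j = c.
Proof.
move=> H i j.
have H1 := psumr_eq0P (fun i _ => sumr_ge0 _ (fun j _ => sqr_ge0 (f i j - c))) H (isT : predT i).
exact: (var0 (H1 i)).
Qed.

Lemma ddg_d (T : finType) m (e : rel T) (cls : T -> 'I_m) (N K l1 c : rat) :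
  symmetric e ->
  (forall x, #|[set y | e x y]|%:R = K) ->
  (forall i, #|[set x | cls x == i]|%:R = N) ->
  (forall x y, x != y -> cls x = cls y -> (common e x y)%:R = l1) ->
  K = m%:R * c -> K + (N - 1) * l1 = m%:R * c^+2 ->
  forall x j, #|[set y | e x y && (cls y == j)]|%:R = c.
Proof.
move=> esym hK hN hl1 hKc hsq.
pose d x j := \sum_y ind (e x y) * ind (cls y == j).
have dE x j : #|[set y | e x y && (cls y == j)]|%:R = d x j.
  by rewrite cardE'; apply: eq_bigr => y _; rewrite indA.
have sd x : \sum_j d x j = K.
  rewrite /d exchange_big /= -(hK x) cardE'; apply: eq_bigr => y _.
  rewrite -mulr_sumr; have := sum_ind_eq (cls y) (fun _ => 1).
  under eq_bigr do rewrite mulr1.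
  by move=> ->; rewrite mulr1.
have sq : \sum_x \sum_j d x j ^+ 2 = \sum_(x : T) (K + (N - 1) * l1).
  transitivity (\sum_x \sum_y \sum_y' ind (e x y) * ind (e x y') * ind (cls y' == cls y)).
    apply: eq_bigr => x _.
    transitivity (\sum_j \sum_y \sum_y' ind (e x y) * ind (e x y') * (ind (cls y == j) * ind (cls y' == j))).
      apply: eq_bigr => j _; rewrite /d expr2 mulr_suml; apply: eq_bigr => y _.
      rewrite mulr_sumr; apply: eq_bigr => y' _; ring.
    rewrite exchange_big /=; apply: eq_bigr => y _.
    rewrite exchange_big /=; apply: eq_bigr => y' _.
    by rewrite -mulr_sumr sum_ind_eq.
  rewrite exchange_big /=; apply: eq_bigr => y _.
  rewrite exchange_big /=.
  transitivity (\sum_y' ind (cls y' == cls y) * (common e y y')%:R).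
    apply: eq_bigr => y' _; rewrite /common cardE' mulr_sumr; apply: eq_bigr => z _.
    by rewrite indA (esym z y) (esym z y'); ring.
  rewrite (bigD1 y) //= eqxx mul1r.
  have -> : (common e y y)%:R = K.
    by rewrite -(hK y) /common; congr (_%:R); apply: eq_card => z; rewrite !inE andbb.
  transitivity (K + \sum_(y' | y' != y) ind (cls y' == cls y) * l1).
    congr (_ + _); apply: eq_bigr => y' ny'; case: eqP => //= hc.
    by rewrite hl1 // eq_sym.
    by rewrite !mul0r.
  rewrite -mulr_suml.
  have : \sum_y' ind (cls y' == cls y) = N by rewrite -(hN (cls y)) cardE'.
  rewrite (bigD1 y) //= eqxx => hs.
  have -> : \sum_(y' | y' != y) ind (cls y' == cls y) = N - 1.
    by rewrite -hs /= mulr1n addrC addrK.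
  by [].
move=> x j; rewrite dE; move: x j; apply: var0_2.
transitivity (\sum_x (\sum_j d x j ^+ 2 + (c ^+ 2 * m%:R - 2 * c * K))).
  apply: eq_bigr => x _; rewrite sum_sq_expand sd sumr_const card_ord.
  rewrite -[1 *+ m]/(m%:R); ring.
rewrite big_split /= sq -big_split /= big1 // => x _.
rewrite hsq hKc; ring.
Qed.

Lemma indsq (b : bool) : ind b * ind b = ind b.
Proof. by case: b; rewrite /= ?mul1r ?mul0r. Qed.

Lemma design_r (Pt : finType) m (phi : 'I_m -> {set Pt}) (k l : rat) :
  #|Pt|%:R = m%:R :> rat -> (forall i, #|phi i|%:R = k) ->
  (forall p q, p != q -> #|[set i | (p \in phi i) && (q \in phi i)]|%:R = l) ->
  (m%:R - 1) * l = k * (k - 1) -> (k = 1 -> m = 1%N) ->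
  forall p, #|[set i | p \in phi i]|%:R = k.
Proof.
move=> hP hk hl hml hk1 p.
have hsz i : \sum_q ind (q \in phi i) = k.
  by rewrite -(hk i) -[phi i in LHS]setIT -cardE'; congr (_%:R); apply: eq_card => q; rewrite !inE andbT.
rewrite cardE'.
have cnt1 : \sum_(q : Pt) 1 = m%:R :> rat.
  by rewrite -hP sumr_const.
have E : \sum_q \sum_i ind (p \in phi i) * ind (q \in phi i) = (\sum_i ind (p \in phi i)) * k.
  rewrite exchange_big /= mulr_suml; apply: eq_bigr => i _.
  by rewrite -mulr_sumr hsz.
have E2 : \sum_q \sum_i ind (p \in phi i) * ind (q \in phi i) = \sum_i ind (p \in phi i) + (m%:R - 1) * l.
  rewrite (bigD1 p) //=; congr (_ + _); first by apply: eq_bigr => i _; rewrite indsq.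
  transitivity (\sum_(q | q != p) l).
    apply: eq_bigr => q nq; rewrite -(hl q p nq) cardE'; apply: eq_bigr => i _.
    by rewrite indA mulrC.
  rewrite -cnt1 [in RHS](bigD1 p) //= addrC addrK mulr_suml.
  by apply: eq_bigr => q _; rewrite mul1r.
have [k1|k1] := eqVneq k 1.
  have m1 := hk1 k1.
  have P1 : forall q : Pt, q = p.
    move=> q; have : (#|Pt| <= 1)%N.
      by move/eqP: hP; rewrite m1 eqr_nat => /eqP ->.
    by move/fintype_le1P => /(_ p) ->.
  have : \sum_q \sum_i ind (q \in phi i) = m%:R * k.
    rewrite exchange_big /= (eq_bigr (fun _ => k)) ?sumr_const ?card_ord //.
    by rewrite mulr_natl.
  have mR : m%:R = 1 :> rat by rewrite m1.
  rewrite (bigD1 p) //= [X in _ + X = _]big1 ?addr0; first by rewrite mR k1 mulr1.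
  by move=> q /eqP; rewrite (P1 q).
apply/eqP; rewrite -subr_eq0; apply/eqP.
have : (\sum_i ind (p \in phi i) - k) * (k - 1) = 0.
  have := E; rewrite E2 hml => H; rewrite mulrBl mulrBr -H; ring.
move/eqP; rewrite mulf_eq0 (negbTE (_ : k - 1 != 0)) ?orbF; first by move/eqP.
by rewrite subr_eq0.
Qed.

Lemma design_int (Pt : finType) m (phi : 'I_m -> {set Pt}) (k l : rat) :
  (forall i, #|phi i|%:R = k) ->
  (forall p q, p != q -> #|[set i | (p \in phi i) && (q \in phi i)]|%:R = l) ->
  (forall p, #|[set i | p \in phi i]|%:R = k) ->
  (m%:R - 1) * l = k * (k - 1) ->
  forall i j, i != j -> #|phi i :&: phi j|%:R = l.
Proof.
move=> hk hl hr hml i.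
pose a p j := ind (p \in phi j).
pose x j := \sum_p a p i * a p j.
have xE j : #|phi i :&: phi j|%:R = x j.
  have -> : phi i :&: phi j = [set p | (p \in phi i) && (p \in phi j)].
    by apply/setP => p; rewrite !inE.
  by rewrite cardE'; apply: eq_bigr => p _; rewrite indA.
have hsz j : \sum_q a q j = k.
  by rewrite /a -(hk j) -[phi j in LHS]setIT -cardE'; congr (_%:R); apply: eq_card => q; rewrite !inE andbT.
have hrr p : \sum_j a p j = k by rewrite -(hr p) cardE'.
have C p q : \sum_j a p j * a q j = if p == q then k else l.
  case: eqP => [<-|/eqP npq].
    by rewrite -(hrr p); apply: eq_bigr => j _; rewrite indsq.
  by rewrite -(hl p q npq) cardE'; apply: eq_bigr => j _; rewrite indA.
have S1 : \sum_j x j = k * k.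
  rewrite /x exchange_big /= (eq_bigr (fun p => a p i * k)); last first.
    by move=> p _; rewrite -mulr_sumr hrr.
  by rewrite -mulr_suml hsz.
have xi : x i = k by rewrite -(hsz i); apply: eq_bigr => p _; rewrite indsq.
have S2 : \sum_j x j ^+ 2 = k * (k + (k - 1) * l).
  transitivity (\sum_p \sum_q a p i * a q i * (\sum_j a p j * a q j)).
    transitivity (\sum_j \sum_p \sum_q a p i * a q i * (a p j * a q j)).
      apply: eq_bigr => j _; rewrite expr2 /x mulr_suml; apply: eq_bigr => p _.
      rewrite mulr_sumr; apply: eq_bigr => q _; ring.
    rewrite exchange_big /=; apply: eq_bigr => p _.
    rewrite exchange_big /=; apply: eq_bigr => q _.
    by rewrite mulr_sumr.
  transitivity (\sum_p a p i * (k + (k - 1) * l)).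
    apply: eq_bigr => p _.
    rewrite (bigD1 p) //= C eqxx indsq.
    rewrite (eq_bigr (fun q => a p i * (a q i * l))); last first.
      by move=> q nq; rewrite C eq_sym (negbTE nq); ring.
    rewrite -mulr_sumr -mulr_suml.
    have : \sum_q a q i = k by [].
    rewrite (bigD1 p) //= => H.
    have -> : \sum_(q | q != p) a q i = k - a p i by rewrite -H; ring.
    rewrite /a; case: (p \in phi i); rewrite /= ?mulr1n; ring.
  by rewrite -mulr_suml hsz mulrC.
have cnt : \sum_(j | j != i) (1 : rat) = m%:R - 1.
  have : \sum_(j : 'I_m) (1 : rat) = m%:R by rewrite sumr_const card_ord.
  by rewrite (bigD1 i) //= => <-; ring.
move=> j nij; rewrite xE; apply: (@var0 _ (fun j => j != i) x l _ j); last by rewrite eq_sym.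
rewrite sum_sq_expand cnt.
have -> : \sum_(j | j != i) x j = k * k - k by rewrite -S1 [in RHS](bigD1 i) //= xi addrC addrK.
have -> : \sum_(j | j != i) x j ^+ 2 = k * (k + (k - 1) * l) - k ^+ 2.
  by rewrite -S2 [in RHS](bigD1 i) //= xi addrC addrK.
have -> : l ^+ 2 * (m%:R - 1) = l * (k * (k - 1)) by rewrite -hml; ring.
ring.
Qed.


Lemma card_setE (T : finType) (A : {set T}) : (#|A|%:R : rat) = \sum_x ind (x \in A).
Proof.
rewrite -sum1_card natr_sum big_mkcond /=; apply: eq_bigr => x _.
by case: (x \in A).
Qed.

Theorem theorem4p3 (n : nat) (s : int) (m : nat)
    (T Pt : finType) (e : rel T) (cls : T -> 'I_m)
    (B : {set {set Pt}}) (phi : 'I_m -> {set Pt}) :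
  s < 0 -> 0 < n%:Z + s ->
  let N : rat := n%:R in
  let S : rat := s%:~R in
  m%:R = (- S) * (N - 1) / (N + S) ->
  is_ddg e cls ((N * (- S) * (N - 1)) / (N + S)) ((- S) * (N - 1))
    ((- S) * (N + S - 1)) ((- S) * (N - 1) * (N + S) / N) N ->
  is_sym_design B m%:R (- S) ((- S) * (N + S) / N) ->
  injective phi -> phi @: setT = B ->
  is_srg (gamma_rel e cls phi) (m%:R * (N + 1)) ((- S) * N)
    ((- S) * (N + S)) ((- S) * (N + S)).
Proof.
move: s => [p|p]; first by []. move=> _ hns; intros N S.
have hS : S = - (p.+1)%:R by rewrite /S NegzE mulrNz.
have hpn : (p.+1 < n)%N by move: hns; rewrite NegzE; lia.
clearbody S; subst S.
set k : rat := (p.+1)%:R.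
rewrite opprK.
have Nk : N - k > 0.
  by rewrite subr_gt0 /N /k ltr_nat.
have Nk0 : N - k != 0 by rewrite gt_eqF.
have N0 : N != 0 by rewrite /N pnatr_eq0; apply/eqP => n0; rewrite n0 in hpn.
have k0 : k != 0 by rewrite /k pnatr_eq0.
have NS : N + - k = N - k by [].
rewrite NS; clearbody k N.
move=> hm [[esym eirr] [hV [hK [_ [_ [hN [hl1 hl2]]]]]]] [hPt hB hblk hpair] hinj himg.
set l : rat := k * (N - k) / N.
have hk i : #|phi i|%:R = k by apply: hblk; rewrite -himg imset_f.
have hpp p1 q1 : p1 != q1 -> #|[set i | (p1 \in phi i) && (q1 \in phi i)]|%:R = l.
  move=> npq; rewrite /l -(hpair p1 q1 npq) -(card_imset _ hinj); congr (_%:R); apply: eq_card => b.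
  rewrite [in RHS]inE -himg; apply/imsetP/andP.
    by case=> i; rewrite inE => hi ->; split; [apply: imset_f|].
  by case=> /imsetP [i _ ->] hi; exists i; rewrite ?inE.
have hml : (m%:R - 1) * l = k * (k - 1).
  by rewrite hm /l; field; rewrite Nk0 N0.
have hk1 : k = 1 -> m = 1%N.
  move=> k1; apply/eqP; rewrite -(eqr_nat rat) hm k1; apply/eqP.
  by rewrite mul1r divff // -k1.
have hr := design_r hPt hk hpp hml hk1.
have hint := design_int hk hpp hr hml.
have hd : forall x j, #|[set y | e x y && (cls y == j)]|%:R = N - k.
  apply: (@ddg_d _ _ _ _ N (k * (N - 1)) (k * (N - k - 1))) => //.
    by rewrite hm; field.
  by rewrite hm; field.
have commC u v : common (gamma_rel e cls phi) u v = common (gamma_rel e cls phi) v u.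
  by rewrite /common; apply: eq_card => w; rewrite !inE andbC.
have dE x p1 : \sum_z ind (e x z) * ind (p1 \in phi (cls z)) = k * (N - k).
  transitivity (\sum_z \sum_j ind (e x z) * ind (cls z == j) * ind (p1 \in phi j)).
    apply: eq_bigr => z _.
    rewrite -(sum_ind_eq (cls z) (fun j => ind (p1 \in phi j))) mulr_sumr.
    by apply: eq_bigr => j _; rewrite mulrA.
  rewrite exchange_big /=.
  transitivity (\sum_j ind (p1 \in phi j) * (N - k)).
    apply: eq_bigr => j _; rewrite -(hd x j) cardE' mulr_sumr.
    by apply: eq_bigr => z _; rewrite indA mulrC.
  by rewrite -mulr_suml -cardE' hr.
have hcom : forall u v, u != v -> (common (gamma_rel e cls phi) u v)%:R = k * (N - k).
  move=> [x|p1] [y|q1] nuv; last 2 first.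
  - rewrite commC /common cardE' (eq_bigr _ (fun w _ => indA _ _)) big_sumType /=.
    rewrite dE [X in _ + X]big1 ?addr0 // => q _; by rewrite mulr0.
  - rewrite /common cardE' (eq_bigr _ (fun w _ => indA _ _)) big_sumType /=.
    have npq : p1 != q1 by apply: contra nuv => /eqP ->.
    rewrite [X in _ + X]big1 ?addr0; last by move=> q _; rewrite mulr0.
    rewrite (sum_cls (fun i => ind (p1 \in phi i) * ind (q1 \in phi i)) hN).
    rewrite -mulr_suml.
    have -> : \sum_i ind (p1 \in phi i) * ind (q1 \in phi i) = l.
      by rewrite -(hpp p1 q1 npq) cardE'; apply: eq_bigr => i _; rewrite indA.
    by rewrite /l; field.
  - rewrite /common cardE' (eq_bigr _ (fun w _ => indA _ _)) big_sumType /=.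
    have nxy : x != y by apply: contra nuv => /eqP ->.
    have -> : \sum_z ind (e x z) * ind (e y z) = (common e x y)%:R.
      by rewrite /common cardE'; apply: eq_bigr => z _; rewrite indA.
    have -> : \sum_q ind (q \in phi (cls x)) * ind (q \in phi (cls y)) = #|phi (cls x) :&: phi (cls y)|%:R.
      by rewrite card_setE; apply: eq_bigr => q _; rewrite inE indA.
    case: (eqVneq (cls x) (cls y)) => h.
      by rewrite hl1 // h setIid hk; ring.
    by rewrite hl2 // hint // /l; field.
  - rewrite /common cardE' (eq_bigr _ (fun w _ => indA _ _)) big_sumType /=.
    rewrite dE [X in _ + X]big1 ?addr0 // => q _; by rewrite mulr0.
split.
- split; first by move=> [x|a] [y|b] //=; apply: esym.
  by move=> [x|a] //=; apply: eirr.
- by rewrite card_sum natrD hV hPt hm; field.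
- move=> [x|a]; rewrite /nbhd cardE' big_sumType /=.
    have -> : k * N = k * (N - 1) + k by ring.
    by rewrite -{1}(hK x) -(hk (cls x)) /nbhd cardE' card_setE.
  rewrite [X in _ + X]big1 ?addr0 // (sum_cls (fun i => ind (a \in phi i)) hN).
  by rewrite -mulr_suml -cardE' hr mulrC.
- by move=> u v nuv _; apply: hcom.
- by move=> u v nuv _; apply: hcom.
Qed.
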